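(* Let $N$ be a non-trivial Abelian group, $Q$ an infinite group, and $\alpha\colon Q\to \mathrm{Aut}(N)$ a homomorphism whose action is free outside $0$, i.e. if $q\in Q$ and $n\in N\setminus\{0\}$ satisfy $\alpha(q)(n)=n$ then $q=1$. Let $\Gamma=N\rtimes_\alpha Q$ and suppose $\Gamma$ is finitely generated. Then $N$ is infinite and the extension $0\to N\to\Gamma\to Q\to 1$ is acentral (i.e. $N$ is an acentral subgroup of $\Gamma$). In particular, $\Gamma$ is not presentable by a product.
   Context: A subgroup $A$ of a group $\Gamma$ is called acentral if for every $g\in A\setminus\{1\}$ the centraliser $C_\Gamma(g)$ is contained in $A$; an extension $1\to N\to\Gamma\to Q\to 1$ is acentral if $N$ is acentral in $\Gamma$. An infinite group $\Gamma$ is not presentable by a product if for every homomorphism $\varphi\colon \Gamma_1\times\Gamma_2\to\Gamma$ whose image has finite index in $\Gamma$, at least one of $\varphi(\Gamma_1)$, $\varphi(\Gamma_2)$ is finite. *)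

(* Defs.v *)
From HB Require Import structures.
From Stdlib Require List.
From mathcomp Require Import all_boot all_algebra.
Set Implicit Arguments. Unset Strict Implicit. Unset Printing Implicit Defensive.
Import GRing.Theory.
Local Open Scope ring_scope.

Record Grp := {
  gcar :> Type;
  gmul : gcar -> gcar -> gcar;
  gone : gcar;
  ginv : gcar -> gcar;
  gmulA : forall x y z, gmul x (gmul y z) = gmul (gmul x y) z;
  gmul1 : forall x, gmul gone x = x;
  gmulV : forall x, gmul (ginv x) x = gone }.

Definition finite_set (T : Type) (A : T -> Prop) : Prop :=
  exists s : list T, forall x, A x -> List.In x s.
Definition infinite_type (T : Type) : Prop := ~ finite_set (fun _ : T => True).

Definition is_subgroup (G : Grp) (H : G -> Prop) : Prop :=
  H (gone G) /\ (forall x y, H x -> H y -> H (@gmul G x y)) /\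
  (forall x, H x -> H (@ginv G x)).
Definition generated (G : Grp) (S : G -> Prop) (x : G) : Prop :=
  forall H : G -> Prop, is_subgroup H -> (forall s, S s -> H s) -> H x.
Definition finitely_generated (G : Grp) : Prop :=
  exists s : list G, forall x, generated (fun y => List.In y s) x.

Definition acentral (G : Grp) (A : G -> Prop) : Prop :=
  is_subgroup A /\
  forall g, A g -> g <> gone G ->
    forall h, @gmul G h g = @gmul G g h -> A h.

Definition finite_index (G : Grp) (H : G -> Prop) : Prop :=
  exists s : list G, forall x, exists t h, List.In t s /\ H h /\ x = @gmul G t h.

Definition not_presentable_by_product (G : Grp) : Prop :=
  infinite_type G /\
  forall (G1 G2 : Grp) (phi : G1 -> G2 -> G),
    (forall a1 a2 b1 b2,
        phi (@gmul G1 a1 a2) (@gmul G2 b1 b2) = @gmul G (phi a1 b1) (phi a2 b2)) ->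
    finite_index (fun g => exists a b, g = phi a b) ->
    finite_set (fun g => exists a, g = phi a (gone G2)) \/
    finite_set (fun g => exists b, g = phi (gone G1) b).

Definition aut_action (N : zmodType) (Q : Grp) (act : Q -> N -> N) : Prop :=
  (forall q, {morph act q : x y / x + y}) /\
  (forall q, bijective (act q)) /\
  (forall q1 q2 n, act (@gmul Q q1 q2) n = act q1 (act q2 n)).

Section SD.
Variables (N : zmodType) (Q : Grp) (act : Q -> N -> N).
Hypothesis Ha : aut_action act.

Definition sd_mul (x y : N * Q) : N * Q :=
  (x.1 + act x.2 y.1, @gmul Q x.2 y.2).
Definition sd_one : N * Q := (0, gone Q).
Definition sd_inv (x : N * Q) : N * Q :=
  (- act (@ginv Q x.2) x.1, @ginv Q x.2).

Lemma act1 n : act (gone Q) n = n.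
Proof.
case: Ha => _ [Hb Hm]. case: (Hb (gone Q)) => g K1 _.
apply: (can_inj K1); by rewrite -Hm gmul1.
Qed.

Lemma sd_mulA x y z : sd_mul x (sd_mul y z) = sd_mul (sd_mul x y) z.
Proof.
case: Ha => Hd [_ Hm]; rewrite /sd_mul /= Hd Hm addrA gmulA //.
Qed.

Lemma sd_mul1 x : sd_mul sd_one x = x.
Proof. by case: x => n q; rewrite /sd_mul /= act1 add0r gmul1. Qed.

Lemma sd_mulV x : sd_mul (sd_inv x) x = sd_one.
Proof. by case: x => n q; rewrite /sd_mul /= addNr gmulV. Qed.

Definition sdprod : Grp :=
  Build_Grp sd_mulA sd_mul1 sd_mulV.
End SD.

(* Main.v *)
Require Import Defs.
From mathcomp Require Import all_boot all_algebra.
From Stdlib Require Import Classical.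
Local Open Scope ring_scope.

Section GrpLemmas.
Variable G : Grp.
Local Notation "x * y" := (@gmul G x y).
Local Notation "1" := (gone G).

Lemma g_mulgVr (x : G) : x * ginv x = 1.
Proof.
rewrite -[x * ginv x]gmul1 -{1}(gmulV (ginv x)).
by rewrite -gmulA (gmulA (ginv x)) gmulV gmul1 gmulV.
Qed.

Lemma g_mulg1 (x : G) : x * 1 = x.
Proof. by rewrite -(gmulV x) gmulA g_mulgVr gmul1. Qed.

Lemma g_cancel (z x y : G) : z * x = z * y -> x = y.
Proof.
move=> H; have := f_equal (fun w => ginv z * w) H.
by rewrite /= !gmulA gmulV !gmul1.
Qed.

Lemma g_invu (x y : G) : y * x = 1 -> y = ginv x.
Proof.
move=> H; rewrite -[y]g_mulg1 -(g_mulgVr x) gmulA H gmul1 //.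
Qed.
End GrpLemmas.

Lemma fin_rel (T U : Type) (P : T -> Prop) (R : T -> U -> Prop) (s : list U) :
  (forall x y u, P x -> P y -> R x u -> R y u -> x = y) ->
  finite_set (fun x => P x /\ exists u, List.In u s /\ R x u).
Proof.
move=> Hu; elim: s => [|u s [l Hl]].
  by exists nil => x [_ [u [[] _]]].
case: (classic (exists x, P x /\ R x u)) => [[x0 [P0 R0]]|Hn].
  exists (x0 :: l) => x [Px [v [[<-|Iv] Rv]]].
    by left; apply: Hu P0 Px R0 Rv.
  by right; apply: Hl; split => //; exists v.
exists l => x [Px [v [[<-|Iv] Rv]]].
  by exfalso; apply: Hn; exists x.
by apply: Hl; split => //; exists v.
Qed.

Lemma fin_inj (T U : Type) (f : T -> U) :
  (forall x y, f x = f y -> x = y) ->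
  finite_set (fun _ : U => True) -> finite_set (fun _ : T => True).
Proof.
move=> Hi [s Hs].
have [l Hl] := @fin_rel T U (fun _ => True) (fun x u => f x = u) s
  (fun x y u _ _ e1 e2 => Hi x y (etrans e1 (esym e2))).
exists l => x _; apply: Hl; split => //; exists (f x); split => //; exact: Hs.
Qed.

Section Abstract.
Variables (G G1 G2 : Grp) (A : G -> Prop) (phi : G1 -> G2 -> G).
Hypothesis hA : acentral A.
Hypothesis hphi : forall a1 a2 b1 b2,
  phi (@gmul G1 a1 a2) (@gmul G2 b1 b2) = @gmul G (phi a1 b1) (phi a2 b2).
Hypothesis hQ : forall H : G -> Prop, (forall x, H x -> A x) -> ~ finite_index H.
Hypothesis hN : ~ finite_set A.

Lemma phi11 : phi (gone G1) (gone G2) = gone G.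
Proof.
apply: (@g_cancel G (phi (gone G1) (gone G2))).
by rewrite -hphi !gmul1 g_mulg1.
Qed.

Lemma phi_split a b : phi a b = @gmul G (phi a (gone G2)) (phi (gone G1) b).
Proof. by rewrite -hphi g_mulg1 gmul1. Qed.

Lemma phi_comm a b :
  @gmul G (phi a (gone G2)) (phi (gone G1) b) =
  @gmul G (phi (gone G1) b) (phi a (gone G2)).
Proof. by rewrite -!hphi !g_mulg1 !gmul1. Qed.

Lemma phi_inv a b : @ginv G (phi a b) = phi (ginv a) (ginv b).
Proof. symmetry; apply: g_invu; by rewrite -hphi !gmulV phi11. Qed.

Lemma all_in_A a b :
  A (phi a (gone G2)) -> phi a (gone G2) <> gone G ->
  A (phi (gone G1) b) -> phi (gone G1) b <> gone G ->
  forall a' b', A (phi a' b').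
Proof.
case: hA => [[A1 [AM AI]] Hc] Ha na Hb nb a' b'.
rewrite phi_split; apply: AM.
  apply: (Hc _ Hb nb); by rewrite phi_comm.
apply: (Hc _ Ha na); by rewrite phi_comm.
Qed.

Lemma infinite_has_nontriv (P : G -> Prop) :
  ~ finite_set P -> exists x, P x /\ x <> gone G.
Proof.
move=> Hn; apply: NNPP => Hno; apply: Hn; exists (gone G :: nil) => x Px.
left; apply: NNPP => ne; apply: Hno; exists x; split => //; by move=> e; apply: ne.
Qed.

Lemma main_abstract :
  finite_index (fun g => exists a b, g = phi a b) ->
  finite_set (fun g => exists a, g = phi a (gone G2)) \/
  finite_set (fun g => exists b, g = phi (gone G1) b).
Proof.
move=> Hfi; apply: NNPP => Hn.
have [Hn1 Hn2] : ~ finite_set (fun g => exists a, g = phi a (gone G2)) /\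
    ~ finite_set (fun g => exists b, g = phi (gone G1) b).
  by split => H; apply: Hn; [left|right].
have [[A1 [AM AI]] Hc] := hA.
case: (classic (exists a, A (phi a (gone G2)) /\ phi a (gone G2) <> gone G)) =>
  [[a [Ha na]]|H1].
  have [_ [[b ->] nb]] := @infinite_has_nontriv _ Hn2.
  have Hb : A (phi (gone G1) b) by apply: (Hc _ Ha na); rewrite phi_comm.
  apply: (hQ _ _ Hfi).
  by move=> x [a' [b' ->]]; apply: (@all_in_A a b Ha na Hb nb).
case: (classic (exists b, A (phi (gone G1) b) /\ phi (gone G1) b <> gone G)) =>
  [[b [Hb nb]]|H2].
  have [_ [[a ->] na]] := @infinite_has_nontriv _ Hn1.
  have Ha : A (phi a (gone G2)) by apply: (Hc _ Hb nb); rewrite phi_comm.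
  apply: (hQ _ _ Hfi).
  by move=> x [a' [b' ->]]; apply: (@all_in_A a b Ha na Hb nb).
have triv : forall a b, A (phi a b) -> phi a b = gone G.
  move=> a b Hab; apply: NNPP => nab.
  have HA : A (phi a (gone G2)).
    apply: (Hc _ Hab nab).
    by rewrite [phi a b]phi_split -gmulA -phi_comm.
  have ea : phi a (gone G2) = gone G.
    by apply: NNPP => ne; apply: H1; exists a.
  have eb : phi (gone G1) b = gone G.
    apply: NNPP => ne; apply: H2; exists b; split => //.
    by rewrite -(gmul1 (phi _ b)) -ea -phi_split.
  by apply: nab; rewrite phi_split ea eb gmul1.
apply: hN; case: Hfi => s Hs.
have Hu : forall x y t, A x -> A y ->
   (fun x t => exists h, (exists a b, h = phi a b) /\ x = @gmul G t h) x t ->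
   (fun x t => exists h, (exists a b, h = phi a b) /\ x = @gmul G t h) y t -> x = y.
  move=> x y t Ax Ay [h [[a [b E1]] E2]] [h' [[a' [b' E3]] E4]]; subst.
  have e : @gmul G (@ginv G (@gmul G t (phi a b))) (@gmul G t (phi a' b')) =
           phi (@gmul G1 (ginv a) a') (@gmul G2 (ginv b) b').
    rewrite hphi -!phi_inv.
    rewrite -(@g_invu G (@gmul G t (phi a b))
              (@gmul G (ginv (phi a b)) (ginv t))); last first.
      by rewrite -gmulA (gmulA (ginv t)) gmulV gmul1 gmulV.
    by rewrite -gmulA (gmulA (ginv t)) gmulV gmul1.
  have : A (phi (@gmul G1 (ginv a) a') (@gmul G2 (ginv b) b')).
    by rewrite -e; apply: AM => //; apply: AI.
  move/triv; rewrite -e => e1.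
  by rewrite -[LHS]g_mulg1 -e1 gmulA g_mulgVr gmul1.
have [l Hl] := @fin_rel _ _ _ _ s Hu.
exists l => x Ax; apply: Hl; split => //.
have [t [h [It [Hh ->]]]] := Hs x.
by exists t; split => //; exists h; split.
Qed.
End Abstract.

Theorem corollary3p5 (N : zmodType) (Q : Grp) (act : Q -> N -> N)
    (Ha : aut_action act) :
  (exists n : N, n != 0) ->
  infinite_type Q ->
  (forall (q : Q) (n : N), n != 0 -> act q n = n -> q = gone Q) ->
  finitely_generated (sdprod Ha) ->
  infinite_type N /\
  acentral (G := sdprod Ha) (fun g => g.2 = gone Q) /\
  not_presentable_by_product (sdprod Ha).
Proof.
move=> [n0 nz] HQ Hfree _.
have [Hadd [Hbij Hm]] := Ha.
have infN : infinite_type N.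
  move=> HfN; apply: HQ; apply: (@fin_inj _ _ (fun q => act q n0) _ HfN).
  move=> x y e.
  have : act (@gmul Q (ginv y) x) n0 = n0.
    by rewrite Hm e -Hm gmulV (@act1 _ _ _ Ha).
  move/(Hfree _ _ nz) => e1.
  by rewrite -[x]gmul1 -(@g_mulgVr Q y) -gmulA e1 g_mulg1.
have acN : acentral (G := sdprod Ha) (fun g => g.2 = gone Q).
  split.
    split => //; split.
      by move=> x y /= hx hy; rewrite /sd_mul /= hx hy gmul1.
    move=> x /= hx; rewrite hx; symmetry; apply: g_invu; exact: g_mulg1.
  move=> [n q] /= hq ng [m r] /=; rewrite /sd_mul /= hq => e.
  have e1 := f_equal fst e; rewrite /= (@act1 _ _ _ Ha) in e1.
  have ne : n != 0.
    apply/negP => /eqP n0'; apply: ng; rewrite hq n0' //.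
  apply: (Hfree r n ne).
  by apply: (GRing.addrI m); rewrite e1 GRing.addrC.
split; first exact: infN. split; first exact: acN.
have QfromS : forall s : list (sdprod Ha),
    (forall q : Q, exists t, List.In t s /\ t.2 = q) -> False.
  move=> s Hs; apply: HQ; exists (List.map snd s) => q _.
  have [t [It <-]] := Hs q; exact: List.in_map.
split.
  move=> [s Hs]; apply: (QfromS s) => q; exists (0, q); split => //; exact: Hs.
move=> G1 G2 phi hphi Hfi.
apply: (@main_abstract (sdprod Ha) G1 G2 (fun g => g.2 = gone Q)) => //.
  move=> H HA [s Hs]; apply: (QfromS s) => q.
  have [t [h [It [Hh e]]]] := Hs ((0 : N), q).
  exists t; split => //.
  have := f_equal snd e; rewrite /= /sd_mul /= (HA h Hh) g_mulg1 => ->//.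
move=> [s Hs]; apply: infN; exists (List.map fst s) => m _.
by apply: (List.in_map fst s (m, gone Q)); apply: Hs.
Qed.
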